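(* Let $0<x_1<x_2<x_3$ and $y_3>0$ with $y_3<1/x_2$, $x_3y_3<1$ and $x_1x_2\ge 1/\sqrt2$. Put $q_2=(x_2,1/x_2)$, $q_3=(x_3,y_3)$, $u:=(x_3-x_2)\,y_3$, and suppose $$1+\frac{x_2-x_1}{x_2}+u\ \ge\ 2.$$ Then $0<u<1$, and $x':=\dfrac{x_2}{1-u}$ satisfies $x'>x_2$, $\dfrac{x'-x_2}{x'}=u$, and $$T_h(x_2,x')\ \le\ T(q_2,q_3).$$
   Context: For points $p=(x_p,y_p)$ and $q=(x_q,y_q)$ in $(0,\infty)^2$ define $T(p,q):=\tfrac12\,(y_p-y_q+x_q-x_p)\,(x_p+y_q)$, and for $a,b>0$ define $T_h(a,b):=T((a,1/a),(b,1/b))=\tfrac12\bigl(\tfrac1a-\tfrac1b+b-a\bigr)\bigl(a+\tfrac1b\bigr)$. (In the paper: a normalized tile consisting of a step $(q_1,q_2)$ between hyperbola points, $q_1=(x_1,1/x_1)$, and a ''corner'' $(q_2,q_3)$ with $q_3$ strictly below the hyperbola $xy=1$, of area at least $2$, can be replaced by a tile with two steps of the same area and no larger crown.) *)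

(* Defs.v *)
From Stdlib Require Import Reals.
Open Scope R_scope.

Definition T (p q : R * R) : R :=
  / 2 * (snd p - snd q + fst q - fst p) * (fst p + snd q).

Definition T_h (a b : R) : R := T (a, / a) (b, / b).

(* Main.v *)
Require Import Defs.
From Stdlib Require Import Reals Lra Psatz.
Open Scope R_scope.

Lemma key (a y y0 : R) : 0 < a -> 0 < y -> y < y0 -> 0 <= 1 - a*y0 ->
  a ^ 4 * (1 - a * y0) + a ^ 2 >= 1 ->
  0 <= a ^ 2 * (1 - a*y0) + (a ^ 2 - 1) * y * y0 + a * y * y0 * (y + y0).
Proof.
  intros Ha Hy Hyy H2 H.
  assert (0 < y0) by lra.
  assert (0 <= a*y*y0*(y+y0)) by (apply Rmult_le_pos; [repeat apply Rmult_le_pos|];lra).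
  destruct (Rle_or_lt 1 (a^2)) as [Hc|Hc].
  - assert (0 <= (a^2-1)*y*y0) by (apply Rmult_le_pos; [apply Rmult_le_pos|];lra).
    assert (0 <= a^2*(1-a*y0)) by (apply Rmult_le_pos; nra).
    lra.
  - assert (Q1 : 0 <= (1-a^2)*(y0*y0 - y*y0)) by (apply Rmult_le_pos; nra).
    assert (Q2 : a*y0 <= 1) by lra.
    assert (Q0 : 0 <= a*y0) by (apply Rmult_le_pos; lra).
    assert (Q3 : (a*y0)*(a*y0) <= 1).
    { assert ((a*y0)*(a*y0) <= 1*(a*y0)) by (apply Rmult_le_compat_r; lra). lra. }
    assert (Q4 : 0 <= (1-a^2)*(1 - (a*y0)*(a*y0))) by (apply Rmult_le_pos; nra).
    assert (Q5 : 0 <= a^2 * (a^2*(1-a*y0) - (1-a^2)*(y0*y0))) by nra.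
    assert (Q6 : 0 <= a^2*(1-a*y0) - (1-a^2)*(y0*y0)).
    { apply (Rmult_le_reg_l (a^2)); [nra|]. lra. }
    nra.
Qed.

Theorem mainTheorem7 (x1 x2 x3 y3 : R) :
  0 < x1 -> x1 < x2 -> x2 < x3 -> 0 < y3 ->
  y3 < / x2 -> x3 * y3 < 1 -> x1 * x2 >= / sqrt 2 ->
  1 + (x2 - x1) / x2 + (x3 - x2) * y3 >= 2 ->
  let u := (x3 - x2) * y3 in
  let x' := x2 / (1 - u) in
  (0 < u /\ u < 1) /\
  x' > x2 /\ (x' - x2) / x' = u /\
  T_h x2 x' <= T (x2, / x2) (x3, y3).
Proof.
  intros H1 H2 H3 H4 H5 H6 H7 H8 u x'.
  assert (Hu0 : 0 < u) by (unfold u; nra).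
  assert (Hu1 : u < 1) by (unfold u; nra).
  assert (Hx' : x' > x2).
  { unfold x'. apply Rlt_gt. apply (Rmult_lt_reg_r (1-u)); [lra|].
    unfold Rdiv. rewrite Rmult_assoc, Rinv_l by lra. nra. }
  split; [lra|]. split; [exact Hx'|]. split.
  { unfold x'. field. split; [lra|]. intro. lra. }
  set (a := x2) in *. set (y := y3) in *.
  set (y0 := (1 - u) / a).
  assert (Ha : 0 < a) by lra.
  assert (Hy0 : 0 < y0) by (unfold y0; apply Rdiv_lt_0_compat; lra).
  assert (Hay0 : a * y0 = 1 - u) by (unfold y0; field; lra).
  assert (Hyy0 : y < y0).
  { apply (Rmult_lt_reg_l a); [lra|]. rewrite Hay0. unfold u. nra. }
  set (w := / sqrt 2) in *.
  assert (Hs : sqrt 2 * sqrt 2 = 2) by (apply sqrt_sqrt; lra).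
  assert (Hsp : 0 < sqrt 2) by (apply sqrt_lt_R0; lra).
  assert (Hw2 : w * w = / 2) by (unfold w; rewrite <- Rinv_mult, Hs; reflexivity).
  assert (Hw : 0 < w) by (unfold w; apply Rinv_0_lt_compat; lra).
  assert (Hwh : w >= / 2) by nra.
  assert (Hux : u * a >= x1).
  { assert (E : (a - x1) / a = 1 - x1 / a) by (field; apply Rgt_not_eq; lra).
    rewrite E in H8. assert (u >= x1 / a) by (unfold u; lra).
    apply Rge_le in H. apply Rle_ge.
    apply (Rmult_le_compat_r a) in H; [|lra].
    unfold Rdiv in H. rewrite Rmult_assoc, Rinv_l in H by lra. lra. }
  assert (Hua2 : u * a ^ 2 >= w) by nra.
  assert (Ha2 : a ^ 2 >= w) by nra.
  assert (Hk : a ^ 4 * (1 - a * y0) + a ^ 2 >= 1).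
  { rewrite Hay0. nra. }
  pose proof (key a y y0 Ha H4 Hyy0 ltac:(lra) Hk) as K.
  assert (Hx'y : x' = / y0) by (unfold x', y0; field; split; lra).
  assert (Hx3 : x3 = a + u / y) by (unfold u, a; field; lra).
  unfold T_h, T; simpl.
  rewrite Hx'y, Rinv_inv, Hx3.
  assert (Hu : u = 1 - a * y0) by lra.
  rewrite Hu.
  assert (E : / 2 * (/ a - y + (a + (1 - a * y0) / y) - a) * (a + y)
    - / 2 * (/ a - y0 + / y0 - a) * (a + y0)
    = / 2 * (y0 - y) / (a * y * y0) *
      (a ^ 2 * (1 - a*y0) + (a ^ 2 - 1) * y * y0 + a * y * y0 * (y + y0))).
  { field. lra. }
  assert (0 <= / 2 * (y0 - y) / (a * y * y0) *
      (a ^ 2 * (1 - a*y0) + (a ^ 2 - 1) * y * y0 + a * y * y0 * (y + y0))).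
  { apply Rmult_le_pos; [|exact K].
    apply Rmult_le_pos; [lra|]. apply Rlt_le, Rinv_0_lt_compat.
    repeat apply Rmult_lt_0_compat; lra. }
  lra.
Qed.
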